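(* Let $n\ge 3$ and $Q\ge 1$ be integers and $T>0$. Consider the Poisson process stochastic block model with parameter $\theta=(\pi,\alpha)$, where $\pi=(\pi_1,\dots,\pi_Q)$ has $\pi_q>0$, $\sum_q\pi_q=1$, and $\alpha=\{\alpha^{(q,l)}\}$ is a collection of nonnegative integrable functions on $[0,T]$ (indexed by $q,l\in\{1,\dots,Q\}$ in the directed setup, and by $q\le l$ in the undirected setup, with $\alpha^{(l,q)}:=\alpha^{(q,l)}$). Assume that in the directed setup the set $\{\alpha^{(q,l)}\}_{q,l=1,\dots,Q}$ contains exactly $Q^2$ distinct functions (resp. in the undirected setup exactly $Q(Q+1)/2$ distinct functions), where two functions are considered equal if they coincide almost everywhere on $[0,T]$. Then $\theta$ is identifiable on $[0,T]$ up to label switching from the distribution $\mathrm{pr}_\theta$: for every parameter $\tilde\theta=(\tilde\pi,\tilde\alpha)$ of the same form with $\mathrm{pr}_\theta=\mathrm{pr}_{\tilde\theta}$, there exists a permutation $\sigma$ of $\{1,\dots,Q\}$ such that $\pi_q=\tilde\pi_{\sigma(q)}$ and $\alpha^{(q,l)}=\tilde\alpha^{(\sigma(q),\sigma(l))}$ almost everywhere on $[0,T]$ for all $q,l=1,\dots,Q$.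
   Context: Poisson process stochastic block model: there are $n$ individuals. In the directed setup the set of dyads is $\mathcal R=\{(i,j): i,j\in\{1,\dots,n\}, i\neq j\}$; in the undirected setup dyads are unordered pairs $\{i,j\}$ with $i\ne j$. Latent variables $Z_1,\dots,Z_n$ are i.i.d. with values in $\{1,\dots,Q\}$ and $\mathrm{pr}(Z_1=q)=\pi_q$. Conditionally on $(Z_1,\dots,Z_n)$, the counting processes $N_{i,j}(\cdot)$ on $[0,T]$, one per dyad, are independent inhomogeneous Poisson processes, $N_{i,j}$ having intensity $\alpha^{(Z_i,Z_j)}$. $\mathrm{pr}_\theta$ denotes the (unconditional) distribution of the multivariate counting process $\{N_{i,j}\}$ over all dyads. *)

(* Defs.v *)
From mathcomp Require Import all_boot all_order all_algebra all_fingroup.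
From mathcomp Require Import all_classical all_reals all_analysis.
Set Implicit Arguments. Unset Strict Implicit. Unset Printing Implicit Defensive.
Import Order.TTheory GRing.Theory Num.Theory.
Import numFieldNormedType.Exports.
Local Open Scope classical_set_scope.
Local Open Scope ring_scope.

Section PPSBM.
Variable R : realType.

Definition pois_pmf (lam : R) (k : nat) : R := lam ^+ k / k`!%:R * expR (- lam).

(* the dyads: ordered pairs i <> j (directed) or unordered pairs {i,j}, i<>j,
   represented by i < j (undirected) *)
Definition is_dyad (directed : bool) n (i j : 'I_n) : bool :=
  if directed then i != j else (i < j)%N.

Definition cumint (f : R -> R) (s t : R) : R :=
  \int[@lebesgue_measure R]_(x in [set` `[s, t]]) f x.

Definition ae_eq_on (T : R) (f g : R -> R) : Prop :=
  f = g %[ae (@lebesgue_measure R) in [set` `[0, T]]].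

Definition valid_param (directed : bool) (Q : nat) (T : R)
    (pi : 'I_Q -> R) (alpha : 'I_Q -> 'I_Q -> R -> R) : Prop :=
  [/\ (forall q, 0 < pi q),
      \sum_(q < Q) pi q = 1,
      (forall q l x, 0 <= x <= T -> 0 <= alpha q l x),
      (forall q l, (@lebesgue_measure R).-integrable [set` `[0, T]]
                     (fun x => (alpha q l x)%:E))
    & (~~ directed -> forall q l, alpha l q = alpha q l)].

(* distinctness (up to a.e. equality) of the intensities:
   Q^2 distinct functions (directed), Q(Q+1)/2 distinct functions (undirected) *)
Definition distinct_intensities (directed : bool) (Q : nat) (T : R)
    (alpha : 'I_Q -> 'I_Q -> R -> R) : Prop :=
  forall q l q' l' : 'I_Q,
    (if directed then (q, l) != (q', l')
     else ((q, l) != (q', l')) && ((q, l) != (l', q'))) ->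
    ~ ae_eq_on T (alpha q l) (alpha q' l').

(* Finite-dimensional distributions of pr_theta: for a time grid
   s 0 <= s 1 <= ... <= s m, the probability that for every dyad (i,j) and
   every r < m the increment N_{ij}(s (r+1)) - N_{ij}(s r) equals k i j r. *)
Definition fdd (directed : bool) (n Q : nat)
    (pi : 'I_Q -> R) (alpha : 'I_Q -> 'I_Q -> R -> R)
    (m : nat) (s : nat -> R) (k : 'I_n -> 'I_n -> nat -> nat) : R :=
  \sum_(z : {ffun 'I_n -> 'I_Q})
    ((\prod_(i < n) pi (z i)) *
     \prod_(i < n) \prod_(j < n | is_dyad directed i j)
        \prod_(r < m) pois_pmf (cumint (alpha (z i) (z j)) (s r) (s r.+1))
                               (k i j r)).

(* pr_theta = pr_theta' on [0,T]: equality of all finite-dimensional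
   distributions of the multivariate counting process (N_{ij})_{(i,j) dyad}
   on [0,T] (processes start at 0). *)
Definition same_law (directed : bool) (n Q : nat) (T : R)
    (pi : 'I_Q -> R) (alpha : 'I_Q -> 'I_Q -> R -> R)
    (pi' : 'I_Q -> R) (alpha' : 'I_Q -> 'I_Q -> R -> R) : Prop :=
  forall (m : nat) (s : nat -> R) (k : 'I_n -> 'I_n -> nat -> nat),
    s 0%N = 0 -> (forall r, (r < m)%N -> s r <= s r.+1) -> s m <= T ->
    fdd directed pi alpha m s k = fdd directed pi' alpha' m s k.

End PPSBM.

(* Main.v *)
Require Import Defs.
From mathcomp Require Import all_boot all_order all_algebra all_fingroup.
From mathcomp Require Import all_classical all_reals all_analysis.
From mathcomp Require Import ring.
From Stdlib Require Import Classical.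

Module PPSBMProof.
Set Implicit Arguments. Unset Strict Implicit. Unset Printing Implicit Defensive.
Import Order.TTheory GRing.Theory Num.Theory.
Import numFieldNormedType.Exports.

Section An.
Local Open Scope classical_set_scope.
Local Open Scope ring_scope.
Context {R : realType}.
Notation mu := (@lebesgue_measure R).

Lemma cumint_add (f : R -> R) (a b c : R) :
  mu.-integrable [set` `[a, c]] (EFin \o f) -> a <= b -> b <= c ->
  cumint f a c = cumint f a b + cumint f b c.
Proof.
move=> fi ab bc; rewrite /cumint.
have := @Rintegral_itvB R f (BLeft a) (BRight c) b fi.
rewrite !bnd_simp => /(_ ab bc) => H.
have -> : \int[mu]_(x in `[b, c]) f x = \int[mu]_(x in `]b, c]) f x.
  rewrite Rintegral_itv_obnd_cbnd //.
  by apply: integrableS fi => //; apply: subset_itvr; rewrite bnd_simp.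
by rewrite -H addrC subrK.
Qed.

End An.
Section An2.
Local Open Scope classical_set_scope.
Local Open Scope ring_scope.
Context {R : realType}.
Notation mu := (@lebesgue_measure R).

Lemma Rint0 (D : set R) (f : R -> R) : measurable D ->
  (forall t, D t -> f t = 0) -> \int[mu]_(t in D) f t = 0.
Proof.
move=> mD f0; rewrite (@eq_Rintegral _ _ _ mu D (fun=> 0)) ?Rintegral_cst ?mul0r //.
by move=> t; rewrite inE => /f0.
Qed.

Lemma prefix_ae (T : R) (f g : R -> R) :
  mu.-integrable [set` `[0, T]] (EFin \o f) ->
  mu.-integrable [set` `[0, T]] (EFin \o g) ->
  (forall t, 0 <= t -> t <= T -> cumint f 0 t = cumint g 0 t) -> ae_eq_on T f g.
Proof.
move=> fi gi fg.
pose h := fun x => f x - g x.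
have hi : mu.-integrable [set` `[0, T]] (EFin \o h).
  have := integrableB _ fi gi.
  move=> /(_ ltac:(by [])).
  by apply: eq_integrable => // x _.
pose hh := h \_ [set` `[0, T]].
have hhi : mu.-integrable setT (EFin \o hh).
  by rewrite /hh -restrict_EFin; rewrite -integrable_mkcond.
have hhi2 : forall y : R, mu.-integrable [set` Interval (BLeft 0) (BRight y)] (EFin \o hh).
  by move=> y; apply: integrableS hhi.
have hloc : locally_integrable [set: R] hh by apply: integrable_locally.
have := FTC1 hhi2 hloc.
set F := (fun x => _).
have FleT : forall y, y <= T -> F y = 0.
  move=> y yT; rewrite /F.
  have [y0|y0] := ltP y 0.
    by rewrite set_itv_ge ?Rintegral_set0 // bnd_simp -ltNge.
  transitivity (\int[mu]_(t in [set` `[0, y]]) h t).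
    apply: eq_Rintegral => t; rewrite inE /= in_itv /= => /andP[t0 ty].
    by rewrite /hh patchE mem_set //= in_itv /= t0 (le_trans ty yT).
  rewrite RintegralB //.
  - by have := fg y y0 yT; rewrite /cumint => ->; rewrite subrr.
  - by apply: integrableS fi => //; apply: subset_itvl; rewrite bnd_simp.
  - by apply: integrableS gi => //; apply: subset_itvl; rewrite bnd_simp.
have F0 : F = cst 0.
  apply/funext => y /=.
  have [yT|Ty] := leP y T; first exact: FleT.
  have := @Rintegral_itvB R hh (BLeft 0) (BRight y) T (hhi2 y).
  rewrite !bnd_simp.
  have hhT : forall t, T < t -> hh t = 0.
    by move=> t Tt; rewrite /hh patchE memNset //= in_itv /= => /andP[_ tT]; move: (lt_le_trans Tt tT); rewrite ltxx.
  have [T0|T0] := leP 0 T; last first.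
    move=> _; rewrite /F Rint0 //.
    by move=> t /=; rewrite in_itv /= => /andP[t0 _]; apply: hhT; exact: (lt_le_trans T0).
  move=> /(_ isT (ltW Ty)); have := FleT T (lexx T); rewrite /F => ->; rewrite subr0 => ->.
  rewrite Rint0 //.
  by move=> t /=; rewrite in_itv /= => /andP[Tt _]; apply: hhT.
rewrite F0.
have H0 : \forall x \ae mu, x != 0.
  exists [set 0]; split => //; first exact: lebesgue_measure_set1.
  by move=> x /= /negP; rewrite negbK => /eqP.
move=> HF; apply: (filterS2 (ae_filter_ringOfSetsType mu) _ H0 HF) => x x0' Hx Dx.
have Dx' := Dx; move: Dx' => /=; rewrite in_itv /= => /andP[x0 xT].
case: Hx => [|_]; first by rewrite /= lte_fin lt_neqAle eq_sym x0' x0.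
rewrite derive1_cst /hh patchE mem_set //.
by move=> /esym/eqP; rewrite /h subr_eq0 => /eqP.
Qed.
End An2.


Section Comb.
Local Open Scope ring_scope.

Definition pe (dir : bool) Q (a b c d : 'I_Q) : Prop :=
  (a = c /\ b = d) \/ (~~ dir /\ a = d /\ b = c).

Definition pteq (X : eqType) (dir : bool) n Q (A : 'I_Q -> 'I_Q -> X)
  (z : {ffun 'I_n -> 'I_Q}) (y : 'I_n -> 'I_n -> X) : bool :=
  [forall i, forall j, is_dyad dir i j ==> (A (z i) (z j) == y i j)].

Definition pt (X : Type) n Q (A : 'I_Q -> 'I_Q -> X) (z : {ffun 'I_n -> 'I_Q}) :=
  fun i j => A (z i) (z j).

Lemma pteqP (X : eqType) dir n Q (A : 'I_Q -> 'I_Q -> X) (z : {ffun 'I_n -> 'I_Q}) (y : 'I_n -> 'I_n -> X) :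
  reflect (forall i j, is_dyad dir i j -> A (z i) (z j) = y i j) (@pteq X dir n Q A z y).
Proof.
apply: (iffP forallP) => [H i j dij|H i].
  by have /forallP/(_ j)/implyP/(_ dij)/eqP := H i.
by apply/forallP => j; apply/implyP => dij; apply/eqP; exact: H.
Qed.

Lemma pe_diag dir Q (a b c : 'I_Q) : pe dir a b c c -> a = c /\ b = c.
Proof. by case=> [[-> ->]|[_ [-> ->]]]. Qed.

Lemma pe_swap dir Q (a b c d : 'I_Q) : pe dir a b c d -> pe dir b a d c.
Proof. by case=> [[-> ->]|[H [-> ->]]]; [left|right]. Qed.

Lemma pe3 dir Q (a b c a' b' c' : 'I_Q) :
  pe dir a b a' b' -> pe dir a c a' c' -> pe dir b c b' c' -> a = a'.
Proof.
case=> [[//]|[_ [e1 e2]]]; case=> [[//]|[_ [e3 e4]]].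
subst; case=> [[e5 e6]|[_ [e5 e6]]]; by rewrite e5.
Qed.

Lemma pe_const dir Q (y0 y1 y2 : 'I_Q) :
  pe dir y0 y1 y1 y2 -> pe dir y0 y2 y1 y2 -> y0 = y1 /\ y1 = y2.
Proof.
case=> [[-> ->]//|[_ [e1 e2]]]; case=> [[e3 _]|[_ [e3 e4]]].
  by rewrite e3 in e1 *; split.
by subst; split.
Qed.

Lemma dyad_lt dir n (i j : 'I_n) : (i < j)%N -> is_dyad dir i j.
Proof. by rewrite /is_dyad; case: dir => // ij; rewrite neq_ltn ij. Qed.


Lemma pe_pair dir n Q (y1 y2 : 'I_n -> 'I_Q) :
  (forall i j, is_dyad dir i j -> pe dir (y1 i) (y1 j) (y2 i) (y2 j)) ->
  forall i j, i != j -> pe dir (y1 i) (y1 j) (y2 i) (y2 j).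
Proof.
move=> H i j ij; case: dir H => H; first exact: H.
move: ij; rewrite neq_ltn => /orP[ij|ji]; first exact/H/dyad_lt.
by apply/pe_swap/H/dyad_lt.
Qed.

Lemma three n (i0 i1 i2 : 'I_n) : val i0 = 0%N -> val i1 = 1%N -> val i2 = 2%N ->
  forall i : 'I_n, exists j k : 'I_n, [/\ i != j, i != k & j != k].
Proof.
move=> v0 v1 v2 i.
have neq (a b : 'I_n) : val a != val b -> a != b.
  by move=> h; apply/eqP => e; move: h; rewrite e eqxx.
have [e0|n0] := eqVneq (val i) 0%N.
  by exists i1, i2; split; apply: neq; rewrite ?e0 ?v1 ?v2.
have [e1|n1] := eqVneq (val i) 1%N.
  by exists i0, i2; split; apply: neq; rewrite ?e1 ?v0 ?v2.
by exists i0, i1; split; apply: neq; rewrite ?v0 ?v1.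
Qed.

Lemma inj_pe dir n Q (i0 i1 i2 : 'I_n) (y1 y2 : {ffun 'I_n -> 'I_Q}) :
  val i0 = 0%N -> val i1 = 1%N -> val i2 = 2%N ->
  (forall i j, is_dyad dir i j -> pe dir (y1 i) (y1 j) (y2 i) (y2 j)) -> y1 = y2.
Proof.
move=> v0 v1 v2 H; apply/ffunP => i.
have [j [k [ij ik jk]]] := three v0 v1 v2 i.
have P := pe_pair H.
exact: (pe3 (P _ _ ij) (P _ _ ik) (P _ _ jk)).
Qed.

Lemma const_pe dir n Q (i0 i1 i2 : 'I_n) (y : 'I_n -> 'I_Q) :
  val i0 = 0%N -> val i1 = 1%N -> val i2 = 2%N ->
  (forall i j i' j', is_dyad dir i j -> is_dyad dir i' j' ->
     pe dir (y i) (y j) (y i') (y j')) -> forall i, y i = y i0.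
Proof.
move=> v0 v1 v2 H.
have d01 : is_dyad dir i0 i1 by apply: dyad_lt; rewrite v0 v1.
have d02 : is_dyad dir i0 i2 by apply: dyad_lt; rewrite v0 v2.
have d12 : is_dyad dir i1 i2 by apply: dyad_lt; rewrite v1 v2.
have [e01 e12] := pe_const (H _ _ _ _ d01 d12) (H _ _ _ _ d02 d12).
move=> i; have [->//|ni] := eqVneq i i0.
have d0i : is_dyad dir i0 i.
  apply: dyad_lt; rewrite v0 lt0n; apply: contra_neq ni => e.
  by apply: val_inj; rewrite /= e v0.
have := H _ _ _ _ d0i d12; rewrite e12 => /pe_diag [_ ->].
by rewrite e01 e12.
Qed.


End Comb.

Section CombR.
Variable R : realType.
Local Open Scope ring_scope.

Lemma sum_pos_ex (I : finType) (P : pred I) (F : I -> R) :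
  0 < \sum_(i | P i) F i -> exists i, P i.
Proof.
case: (pickP P) => [i Pi|P0]; first by exists i.
by rewrite big_pred0 // ltxx.
Qed.

Lemma sum_pos (I : finType) (P : pred I) (F : I -> R) i0 :
  (forall i, 0 <= F i) -> P i0 -> 0 < F i0 -> 0 < \sum_(i | P i) F i.
Proof.
move=> F0 Pi0 Fi0; rewrite (bigD1 i0) //=.
by apply: (lt_le_trans Fi0); rewrite lerDl; apply: sumr_ge0.
Qed.

Lemma comb (X : eqType) dir n Q (A A' : 'I_Q -> 'I_Q -> X) (pi pi' : 'I_Q -> R) :
  (3 <= n)%N ->
  (forall q l q' l', A q l = A q' l' -> pe dir q l q' l') ->
  (forall q, 0 < pi q) -> (forall q, 0 < pi' q) ->
  (forall y : 'I_n -> 'I_n -> X,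
     \sum_(z | pteq dir A z y) \prod_(i < n) pi (z i) =
     \sum_(z | pteq dir A' z y) \prod_(i < n) pi' (z i)) ->
  exists s : {perm 'I_Q},
    (forall q, pi' q = pi (s q)) /\ (forall q l, A' q l = A (s q) (s l)).
Proof.
move=> n3 sep pip pip' mix.
have h0 : (0 < n)%N by apply: leq_trans n3.
have h1 : (1 < n)%N by apply: leq_trans n3.
have h2 : (2 < n)%N by apply: leq_trans n3.
pose i0 := Ordinal h0; pose i1 := Ordinal h1; pose i2 := Ordinal h2.
have v0 : val i0 = 0%N by []. have v1 : val i1 = 1%N by []. have v2 : val i2 = 2%N by [].
have d01 : is_dyad dir i0 i1 by apply: dyad_lt.
have d02 : is_dyad dir i0 i2 by apply: dyad_lt.
have d12 : is_dyad dir i1 i2 by apply: dyad_lt.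
have n10 : (i1 == i0) = false by rewrite -val_eqE.
have n20 : (i2 == i0) = false by rewrite -val_eqE.
have n02 : (i0 == i2) = false by rewrite -val_eqE.
have n12 : (i1 == i2) = false by rewrite -val_eqE.
pose w (z : {ffun 'I_n -> 'I_Q}) := \prod_(i < n) pi (z i).
pose w' (z : {ffun 'I_n -> 'I_Q}) := \prod_(i < n) pi' (z i).
have wpos z : 0 < w z by apply: prodr_gt0.
have wpos' z : 0 < w' z by apply: prodr_gt0.
have uniq (y : 'I_n -> 'I_n -> X) z1 z2 :
    pteq dir A z1 y -> pteq dir A z2 y -> z1 = z2.
  move=> /pteqP H1 /pteqP H2; apply: (inj_pe v0 v1 v2) => i j dij.
  by apply: sep; rewrite H1 // H2.
have E1 (z' : {ffun 'I_n -> 'I_Q}) : exists z, pteq dir A z (pt A' z').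
  apply: (sum_pos_ex (P := fun z => pteq dir A z (pt A' z')) (F := w)); rewrite mix.
  apply: (sum_pos (F := w') (i0 := z')) => //; first by move=> z; apply: ltW.
  by apply/pteqP.
have E2 (z : {ffun 'I_n -> 'I_Q}) : exists z', pteq dir A' z' (pt A z).
  apply: (sum_pos_ex (P := fun z' => pteq dir A' z' (pt A z)) (F := w')); rewrite -mix.
  apply: (sum_pos (F := w) (i0 := z)) => //; first by move=> z'; apply: ltW.
  by apply/pteqP.
pose Phi (z' : {ffun 'I_n -> 'I_Q}) := odflt z' [pick z | pteq dir A z (pt A' z')].
have PhiP (z' : {ffun 'I_n -> 'I_Q}) : pteq dir A (Phi z') (pt A' z').
  rewrite /Phi; case: pickP => [z //|H].
  by have [z Hz] := E1 z'; rewrite H in Hz.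
have Phisurj (y : {ffun 'I_n -> 'I_Q}) : exists z', Phi z' = y.
  have [z' /pteqP Hz'] := E2 y; exists z'.
  apply: (uniq (pt A' z')) => //; apply/pteqP => i j dij.
  by rewrite /pt Hz'.
have Phiinj : injective Phi.
  pose g y := odflt y [pick z' | Phi z' == y].
  have gK : cancel g Phi.
    move=> y; rewrite /g; case: pickP => [z /eqP //|H].
    by have [z' e] := Phisurj y; move: (H z'); rewrite e eqxx.
  have [g' gg' g'g] := injF_bij (can_inj gK).
  have e x : Phi x = g' x by rewrite -{1}(g'g x) gK.
  by move=> x y; rewrite !e => /(congr1 g); rewrite !g'g.
pose cst q : {ffun 'I_n -> 'I_Q} := [ffun=> q].
pose sg q := Phi (cst q) i0.
have Phic q : Phi (cst q) = cst (sg q).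
  apply/ffunP => i; rewrite ffunE /sg.
  apply: (const_pe v0 v1 v2) => a b a' b' dab dab'.
  have /pteqP H := PhiP (cst q).
  by apply: sep; rewrite H // H // /pt !ffunE.
have KA q : A' q q = A (sg q) (sg q).
  have /pteqP H := PhiP (cst q).
  by have := H _ _ d01; rewrite Phic /pt !ffunE => ->.
have sginj : injective sg.
  move=> q l e; have : Phi (cst q) = Phi (cst l) by rewrite !Phic e.
  by move/Phiinj/ffunP/(_ i0); rewrite !ffunE.
have F1 q l : A' q l = A (sg q) (sg l).
  pose z1 : {ffun 'I_n -> 'I_Q} := [ffun i => if i == i0 then q else l].
  have /pteqP H1 := PhiP z1.
  have e1 : Phi z1 i1 = sg l.
    have := H1 _ _ d12; rewrite /pt !ffunE n10 n20 KA.
    by move=> /sep /pe_diag [-> _].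
  have e2 : A' q l = A (Phi z1 i0) (sg l).
    by have := H1 _ _ d01; rewrite /pt !ffunE eqxx n10 e1 => <-.
  pose z2 : {ffun 'I_n -> 'I_Q} := [ffun i => if i == i2 then l else q].
  have /pteqP H2 := PhiP z2.
  have e3 : Phi z2 i0 = sg q.
    have := H2 _ _ d01; rewrite /pt !ffunE n02 n12 KA.
    by move=> /sep /pe_diag [-> _].
  have e4 : A' q l = A (sg q) (Phi z2 i2).
    by have := H2 _ _ d02; rewrite /pt !ffunE n02 eqxx e3 => <-.
  have := sep _ _ _ _ (etrans (esym e2) e4).
  case=> [[e5 _]|[_ [_ e5]]]; first by rewrite e2 e5.
  by rewrite (sginj _ _ e5) KA.
have F3 q : pi' q = pi (sg q).
  have := mix (pt A' (cst q)).
  rewrite (big_pred1 (cst (sg q))); last first.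
    move=> z /=; apply/idP/eqP => [Hz|->].
      apply: (uniq _ _ _ Hz); apply/pteqP => i j dij.
      by rewrite /pt !ffunE KA.
    by apply/pteqP => i j _; rewrite /pt !ffunE KA.
  rewrite (big_pred1 (cst q)); last first.
    move=> z /=; apply/idP/eqP => [/pteqP Hz|->]; last by apply/pteqP.
    have : [ffun i => sg (z i)] = cst (sg q).
      apply: (uniq (pt A' (cst q))); apply/pteqP => i j dij.
        by rewrite !ffunE -F1 (Hz _ _ dij).
      by rewrite /pt !ffunE KA.
    move=> e; apply/ffunP => i; apply: sginj.
    by have := congr1 (fun f : {ffun 'I_n -> 'I_Q} => f i) e; rewrite /= !ffunE.
  have pc (p : 'I_Q -> R) r : \prod_(i < n) p ((cst r) i) = p r ^+ n.
    rewrite (eq_bigr (fun=> p r)) ?prodr_const ?card_ord // => i _.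
    by rewrite ffunE.
  rewrite !pc => /eqP; rewrite eqrXn2 ?ltW // => /eqP ->.
  done.
exists (perm sginj); split => [q|q l]; rewrite !permE; [exact: F3|exact: F1].
Qed.

End CombR.


Section Lag.
Variable R : realType.
Local Open Scope ring_scope.

Lemma lagrange (I D : finType) (P : pred D) (K : Type) (mono : K -> (D -> R) -> R)
  (inc : K -> D -> K) (k0 : K) :
  (forall k d x, P d -> mono (inc k d) x = x d * mono k x) ->
  (forall x, mono k0 x = 1) ->
  forall (c : I -> R) (v : I -> D -> R),
  (forall k, \sum_i c i * mono k (v i) = 0) ->
  forall p : D -> R, \sum_(i | [forall d, P d ==> (v i d == p d)]) c i = 0.
Proof.
move=> monoS mono0 c v H p.
have step (G : I -> R) : (forall k, \sum_i c i * G i * mono k (v i) = 0) ->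
    forall d a, P d -> forall k,
    \sum_i c i * (G i * (v i d - a)) * mono k (v i) = 0.
  move=> HG d a Pd k.
  transitivity (\sum_i c i * G i * mono (inc k d) (v i) -
                a * \sum_i c i * G i * mono k (v i)); last first.
    by rewrite !HG mulr0 subr0.
  rewrite mulr_sumr -sumrB; apply: eq_bigr => i _; rewrite monoS //; ring.
pose f (i j : I) := if [pick d | P d && (v i d != p d)] is Some d
                    then v j d - v i d else 1.
have iter (r : seq I) k : \sum_j c j * (\prod_(i <- r) f i j) * mono k (v j) = 0.
  elim: r k => [|i r IH] k.
    by rewrite -[RHS](H k); apply: eq_bigr => j _; rewrite big_nil mulr1.
  case E: [pick d | P d && (v i d != p d)] => [d|].
    have fE j : f i j = v j d - v i d by rewrite /f E.
    have Pd : P d by move: E; case: pickP => // d' /andP[Pd _] [<-].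
    rewrite -[RHS](step _ IH d (v i d) Pd k); apply: eq_bigr => j _.
    by rewrite big_cons fE; ring.
  have fE j : f i j = 1 by rewrite /f E.
  by rewrite -[RHS](IH k); apply: eq_bigr => j _; rewrite big_cons fE mul1r.
have := iter (enum I) k0.
under eq_bigr do rewrite mono0 mulr1.
rewrite (bigID (fun j => [forall d, P d ==> (v j d == p d)])) /=.
rewrite [X in _ + X]big1 ?addr0; last first.
  move=> j /forallPn [d]; rewrite negb_imply => Hd.
  case E: [pick d | P d && (v j d != p d)] => [d'|]; last first.
    by move: E; case: pickP => // /(_ d); rewrite Hd.
  have -> : \prod_(i <- enum I) f i j = 0.
    apply/eqP; rewrite prodf_seq_eq0; apply/hasP; exists j; rewrite ?mem_enum //.
    by rewrite /f E subrr eqxx.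
  by rewrite mulr0.
pose g := \prod_(i <- enum I) (if [pick d | P d && (v i d != p d)] is Some d
                    then p d - v i d else 1).
rewrite (eq_bigr (fun j => c j * g)); last first.
  move=> j /forallP gj; congr (_ * _); apply: eq_bigr => i _; rewrite /f.
  case: pickP => // d /andP[Pd _].
  by have /implyP/(_ Pd)/eqP -> := gj d.
rewrite -mulr_suml => /eqP; rewrite mulf_eq0 => /orP[/eqP //|].
rewrite prodf_seq_eq0 => /hasP[i _] /=.
case: pickP => [d /andP[_ Hd]|_]; last by rewrite oner_eq0.
by rewrite subr_eq0 eq_sym (negbTE Hd).
Qed.

End Lag.


Section Glue.
Variable R : realType.
Local Open Scope ring_scope.

Lemma grid_exists (T : R) (L : seq R) : 0 <= T ->
  (forall t, t \in L -> 0 <= t <= T) ->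
  exists (m : nat) (s : nat -> R),
    [/\ s 0%N = 0, (forall r, (r < m)%N -> s r <= s r.+1),
        (forall r, (r <= m)%N -> 0 <= s r <= T) &
        (forall t, t \in L -> exists2 r, (r <= m)%N & s r = t)].
Proof.
move=> T0 LT.
pose sL := sort <=%R (0 :: L).
have ssL : sorted <=%R sL by apply: sort_sorted => x y; exact: le_total.
have szL : size sL = (size L).+1 by rewrite size_sort.
have memL t : t \in sL -> 0 <= t <= T.
  by rewrite mem_sort inE => /orP[/eqP ->|/LT //]; rewrite lexx.
have mono i j : (i <= j <= size L)%N -> nth 0 sL i <= nth 0 sL j.
  move=> /andP[ij jm]; apply: le_sorted_leq_nth => //; rewrite inE szL ltnS //.
  exact: leq_trans jm.
have inr r : (r <= size L)%N -> 0 <= nth 0 sL r <= T.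
  by move=> rm; apply: memL; apply: mem_nth; rewrite szL ltnS.
exists (size L), (nth 0 sL); split.
- have : 0 \in sL by rewrite mem_sort mem_head.
  move=> /(nthP 0) [i]; rewrite szL ltnS => im e.
  apply/eqP; rewrite eq_le; have /andP[-> _] := inr 0%N isT.
  by rewrite -[X in _ <= X]e mono // im andbT.
- by move=> r rm; apply: mono; rewrite leqnSn.
- exact: inr.
- move=> t tL; have : t \in sL by rewrite mem_sort inE tL orbT.
  by move=> /(nthP 0) [i]; rewrite szL ltnS => im e; exists i.
Qed.


Section Prod3.
Variables (dir : bool) (n m : nat).

Lemma prod3_split (F G : 'I_n -> 'I_n -> 'I_m -> R) :
  \prod_(i < n) \prod_(j < n | is_dyad dir i j) \prod_(r < m) (F i j r * G i j r) =
  (\prod_(i < n) \prod_(j < n | is_dyad dir i j) \prod_(r < m) F i j r) *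
  (\prod_(i < n) \prod_(j < n | is_dyad dir i j) \prod_(r < m) G i j r).
Proof.
rewrite -big_split; apply: eq_bigr => i _; rewrite -big_split.
by apply: eq_bigr => j _; exact: big_split.
Qed.

Lemma prod3_delta (x : 'I_n -> 'I_n -> 'I_m -> R) i0 j0 (r0 : 'I_m) :
  is_dyad dir i0 j0 ->
  \prod_(i < n) \prod_(j < n | is_dyad dir i j) \prod_(r < m)
     x i j r ^+ ((i == i0) && (j == j0) && ((r : nat) == r0)) = x i0 j0 r0.
Proof.
move=> d0; rewrite (bigD1 i0) //= [X in _ * X]big1 ?mulr1; last first.
  move=> i /negbTE ->; apply: big1 => j _; apply: big1 => r _; by rewrite expr0.
rewrite eqxx (bigD1 j0) //= [X in _ * X]big1 ?mulr1; last first.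
  move=> j /andP[_ /negbTE ->]; apply: big1 => r _; by rewrite expr0.
rewrite eqxx (bigD1 r0) //= eqxx expr1 [X in _ * X]big1 ?mulr1 // => r ne.
by rewrite val_eqE (negbTE ne) expr0.
Qed.

End Prod3.

Lemma mix_law dir n Q (pi pi' : 'I_Q -> R) (alpha alpha' : 'I_Q -> 'I_Q -> R -> R)
  m (s : nat -> R) :
  (forall k : 'I_n -> 'I_n -> nat -> nat,
     fdd dir pi alpha m s k = fdd dir pi' alpha' m s k) ->
  forall y : 'I_n -> 'I_n -> {ffun 'I_m -> R},
  \sum_(z | pteq dir (fun q l => [ffun r : 'I_m => cumint (alpha q l) (s r) (s r.+1)]) z y)
     \prod_(i < n) pi (z i) =
  \sum_(z | pteq dir (fun q l => [ffun r : 'I_m => cumint (alpha' q l) (s r) (s r.+1)]) z y)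
     \prod_(i < n) pi' (z i).
Proof.
move=> law y.
pose D := ('I_n * 'I_n * 'I_m)%type.
pose P := fun d : D => is_dyad dir d.1.1 d.1.2.
pose mono (k : 'I_n -> 'I_n -> nat -> nat) (x : D -> R) :=
  \prod_(i < n) \prod_(j < n | is_dyad dir i j) \prod_(r < m) x (i, j, r) ^+ k i j r.
pose E (x : D -> R) :=
  \prod_(i < n) \prod_(j < n | is_dyad dir i j) \prod_(r < m) expR (- x (i, j, r)).
pose C (k : 'I_n -> 'I_n -> nat -> nat) :=
  \prod_(i < n) \prod_(j < n | is_dyad dir i j) \prod_(r < m) ((k i j r)`!%:R)^-1 : R.
pose v (al : 'I_Q -> 'I_Q -> R -> R) (z : {ffun 'I_n -> 'I_Q}) (d : D) :=
  cumint (al (z d.1.1) (z d.1.2)) (s d.2) (s d.2.+1).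
have fddE al (p : 'I_Q -> R) k : fdd dir p al m s k =
    C k * \sum_(z : {ffun 'I_n -> 'I_Q}) (\prod_(i < n) p (z i) * E (v al z)) * mono k (v al z).
  rewrite /fdd mulr_sumr; apply: eq_bigr => z _.
  transitivity (\prod_(i < n) p (z i) * \prod_(i < n) \prod_(j < n | is_dyad dir i j)
     \prod_(r < m) (((k i j r)`!%:R)^-1 * (expR (- v al z (i, j, r)) *
        (v al z (i, j, r)) ^+ k i j r))).
    congr (_ * _); apply: eq_bigr => i _; apply: eq_bigr => j _; apply: eq_bigr => r _.
    by rewrite /pois_pmf /v /=; ring.
  rewrite !prod3_split /C /E /mono; ring.
have Cpos k : 0 < C k.
  apply: prodr_gt0 => i _; apply: prodr_gt0 => j _; apply: prodr_gt0 => r _.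
  by rewrite invr_gt0 ltr0n fact_gt0.
pose inc (k : 'I_n -> 'I_n -> nat -> nat) (d : D) :=
  fun i j r => (k i j r + ((i == d.1.1) && (j == d.1.2) && (r == val d.2)))%N.
have monoS k d x : P d -> mono (inc k d) x = x d * mono k x.
  case: d => [[i0 j0] r0] Pd; rewrite /mono /inc.
  transitivity (\prod_(i < n) \prod_(j < n | is_dyad dir i j) \prod_(r < m)
     (x (i, j, r) ^+ k i j r * x (i, j, r) ^+ ((i == i0) && (j == j0) && ((r : nat) == r0)))).
    by apply: eq_bigr => i _; apply: eq_bigr => j _; apply: eq_bigr => r _; rewrite exprD.
  rewrite prod3_split (prod3_delta (fun i j r => x (i, j, r))) //.
  by rewrite mulrC.
have mono0 x : mono (fun _ _ _ => 0%N) x = 1.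
  by apply: big1 => i _; apply: big1 => j _; apply: big1 => r _; rewrite expr0.
pose I := ({ffun 'I_n -> 'I_Q} + {ffun 'I_n -> 'I_Q})%type.
pose w (p : 'I_Q -> R) (z : {ffun 'I_n -> 'I_Q}) := \prod_(i < n) p (z i).
pose c (i : I) := match i with inl z => w pi z * E (v alpha z)
                             | inr z => - (w pi' z * E (v alpha' z)) end.
pose vv (i : I) := match i with inl z => v alpha z | inr z => v alpha' z end.
pose p := fun d : D => y d.1.1 d.1.2 d.2.
have Hsum k : \sum_(i : I) c i * mono k (vv i) = 0.
  rewrite big_sumType /=.
  have := law k; rewrite !fddE => /(mulfI (lt0r_neq0 (Cpos k))) ->.
  by under [X in _ + X]eq_bigr do rewrite mulNr; rewrite sumrN subrr.
have := lagrange monoS mono0 Hsum p.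
rewrite big_sumType /=.
have Egood al z : [forall d, P d ==> (v al z d == p d)] -> E (v al z) = E p.
  move=> /forallP H; apply: eq_bigr => i _; apply: eq_bigr => j dij.
  apply: eq_bigr => r _; congr (expR (- _)).
  by have /implyP/(_ dij)/eqP := H (i, j, r).
have goodE al z : [forall d, P d ==> (v al z d == p d)] =
    pteq dir (fun q l => [ffun r : 'I_m => cumint (al q l) (s r) (s r.+1)]) z y.
  apply/idP/pteqP => [/forallP H i j dij|H].
    apply/ffunP => r; rewrite ffunE.
    by have /implyP/(_ dij)/eqP := H (i, j, r).
  apply/forallP => -[[i j] r]; apply/implyP => dij; apply/eqP.
  by rewrite /v /p /= -(H i j dij) ffunE.
rewrite (eq_bigr (fun z => w pi z * E p)); last by move=> z /Egood ->.
rewrite [X in _ + X](eq_bigr (fun z => - (w pi' z * E p))); last by move=> z /Egood ->.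
rewrite (eq_bigl _ _ (goodE alpha)) (eq_bigl _ _ (goodE alpha')).
rewrite sumrN -!mulr_suml => /eqP; rewrite subr_eq0 => /eqP /mulIf; apply.
by apply: lt0r_neq0; apply: prodr_gt0 => i _; apply: prodr_gt0 => j _;
   apply: prodr_gt0 => r _; exact: expR_gt0.
Qed.


Section Grid.
Local Open Scope classical_set_scope.
Local Open Scope ring_scope.
Notation mu := (@lebesgue_measure R).

Lemma prefix_sum (T : R) (f : R -> R) m (s : nat -> R) :
  mu.-integrable [set` `[0, T]] (EFin \o f) -> s 0%N = 0 ->
  (forall r, (r < m)%N -> s r <= s r.+1) ->
  (forall r, (r <= m)%N -> 0 <= s r <= T) ->
  forall r, (r <= m)%N -> cumint f 0 (s r) = \sum_(u < r) cumint f (s u) (s u.+1).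
Proof.
move=> fi s0 smono srange; elim=> [|r IH] rm.
  rewrite big_ord0 s0.
  have H := @cumint_add R f 0 0 0.
  have fi0 : mu.-integrable [set` `[0, 0]] (EFin \o f).
    apply: integrableS fi => //; apply: subset_itvl; rewrite bnd_simp.
    by have /andP[] := srange 0%N isT; rewrite s0.
  have := H fi0 (lexx _) (lexx _); set c := cumint f 0 0 => e.
  by apply: (@addrI _ c); rewrite addr0 -e.
rewrite big_ord_recr /= -IH ?(ltnW rm) //.
have /andP[sr0 _] := srange r (ltnW rm).
have /andP[_ sr1] := srange r.+1 rm.
apply: cumint_add => //; last exact: smono.
by apply: integrableS fi => //; apply: subset_itvl; rewrite bnd_simp.
Qed.

Lemma incr_prefix (T : R) (f g : R -> R) m (s : nat -> R) :
  mu.-integrable [set` `[0, T]] (EFin \o f) ->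
  mu.-integrable [set` `[0, T]] (EFin \o g) -> s 0%N = 0 ->
  (forall r, (r < m)%N -> s r <= s r.+1) ->
  (forall r, (r <= m)%N -> 0 <= s r <= T) ->
  (forall u, (u < m)%N -> cumint f (s u) (s u.+1) = cumint g (s u) (s u.+1)) ->
  forall r, (r <= m)%N -> cumint f 0 (s r) = cumint g 0 (s r).
Proof.
move=> fi gi s0 smono srange H r rm.
rewrite (prefix_sum fi s0 smono srange rm) (prefix_sum gi s0 smono srange rm).
by apply: eq_bigr => u _; apply: H; exact: leq_trans (ltn_ord u) rm.
Qed.

Lemma grid_step dir n Q (T : R) (pi : 'I_Q -> R) (alpha : 'I_Q -> 'I_Q -> R -> R)
    (pi' : 'I_Q -> R) (alpha' : 'I_Q -> 'I_Q -> R -> R) (L : seq R) :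
  (3 <= n)%N -> 0 <= T -> valid_param dir T pi alpha -> valid_param dir T pi' alpha' ->
  same_law dir n T pi alpha pi' alpha' ->
  (forall t, t \in L -> 0 <= t <= T) ->
  (forall q l q' l', (forall t, t \in L -> cumint (alpha q l) 0 t = cumint (alpha q' l') 0 t) ->
     pe dir q l q' l') ->
  exists sg : {perm 'I_Q}, (forall q, pi' q = pi (sg q)) /\
    (forall q l t, t \in L -> cumint (alpha' q l) 0 t = cumint (alpha (sg q) (sg l)) 0 t).
Proof.
move=> n3 T0 [pip _ _ inta _] [pip' _ _ inta' _] law LT sepL.
have [m [s [s0 smono srange sL]]] := grid_exists T0 LT.
have pref (f g : R -> R) : mu.-integrable [set` `[0, T]] (EFin \o f) ->
    mu.-integrable [set` `[0, T]] (EFin \o g) ->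
    (forall u : 'I_m, cumint f (s u) (s u.+1) = cumint g (s u) (s u.+1)) ->
    forall t, t \in L -> cumint f 0 t = cumint g 0 t.
  move=> fi gi H t /sL [r rm <-].
  apply: (incr_prefix fi gi s0 smono srange) => // u um.
  exact: (H (Ordinal um)).
have law' (k : 'I_n -> 'I_n -> nat -> nat) :
    fdd dir pi alpha m s k = fdd dir pi' alpha' m s k.
  apply: law => //; by have /andP[] := srange m (leqnn m).
have := comb n3 _ pip pip' (mix_law law').
case=> [q l q' l' e|sg [H1 H2]].
  apply: sepL; apply: pref; [exact: inta|exact: inta|] => u.
  by have := congr1 (fun F : {ffun 'I_m -> R} => F u) e; rewrite !ffunE.
exists sg; split => // q l.
apply: pref; [exact: inta'|exact: inta|] => u.
by have := congr1 (fun F : {ffun 'I_m -> R} => F u) (H2 q l); rewrite !ffunE.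
Qed.

End Grid.

End Glue.

End PPSBMProof.
Import PPSBMProof.

Local Open Scope ring_scope.

Theorem proposition1 (R : realType) (directed : bool) (n Q : nat) (T : R)
    (pi : 'I_Q -> R) (alpha : 'I_Q -> 'I_Q -> R -> R) :
  (3 <= n)%N -> (1 <= Q)%N -> 0 < T ->
  valid_param directed T pi alpha ->
  distinct_intensities directed T alpha ->
  forall (pi' : 'I_Q -> R) (alpha' : 'I_Q -> 'I_Q -> R -> R),
    valid_param directed T pi' alpha' ->
    same_law directed n T pi alpha pi' alpha' ->
    exists sigma : {perm 'I_Q},
      (forall q, pi q = pi' (sigma q)) /\
      (forall q l, ae_eq_on T (alpha q l) (alpha' (sigma q) (sigma l))).
Proof.
move=> n3 Q1 T0 vp dist pi' alpha' vp' law.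
have vp0 := vp; have vp0' := vp'.
case: vp0 => pip _ _ inta _; case: vp0' => pip' _ _ inta' _.
have T0' : 0 <= T by apply: Order.POrderTheory.ltW.
have sepw (x : 'I_Q * 'I_Q * 'I_Q * 'I_Q) : exists t : R, (0 <= t <= T) /\
    (~ pe directed x.1.1.1 x.1.1.2 x.1.2 x.2 ->
       cumint (alpha x.1.1.1 x.1.1.2) 0 t <> cumint (alpha x.1.2 x.2) 0 t).
  case: x => [[[q l] q'] l'] /=.
  case: (classic (pe directed q l q' l')) => [Hpe|npe].
    by exists 0; split => //; rewrite Order.POrderTheory.lexx T0'.
  have nae : ~ ae_eq_on T (alpha q l) (alpha q' l').
    apply: dist; case: ifP => hd.
      by apply/negP => /eqP [e1 e2]; apply: npe; left.
    apply/andP; split; apply/negP => /eqP [e1 e2]; apply: npe; [left|right] => //.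
    by rewrite hd.
  apply: NNPP => H; apply: nae; apply: prefix_ae; [exact: inta|exact: inta|].
  move=> t t0 tT; apply: NNPP => ne; apply: H; exists t; split => //.
  by rewrite t0 tT.
case: (boolp.choice sepw) => tp Htp.
suff [sg [G1 G2]] : exists sg : {perm 'I_Q}, (forall q, pi' q = pi (sg q)) /\
    (forall q l t, 0 <= t -> t <= T ->
       cumint (alpha' q l) 0 t = cumint (alpha (sg q) (sg l)) 0 t).
  exists (sg^-1)%g; split => [q|q l]; first by rewrite G1 permKV.
  apply: prefix_ae; [exact: inta|exact: inta'|] => t t0 tT.
  by rewrite G2 // !permKV.
apply: NNPP => nG.
have witness (sg : {perm 'I_Q}) : exists t : R, (0 <= t <= T) /\
    ~ ((forall q, pi' q = pi (sg q)) /\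
       (forall q l, cumint (alpha' q l) 0 t = cumint (alpha (sg q) (sg l)) 0 t)).
  apply: NNPP => H; apply: nG; exists sg; split.
    move=> q; apply: NNPP => ne; apply: H; exists 0; split.
      by rewrite Order.POrderTheory.lexx T0'.
    by case=> /(_ q).
  move=> q l t t0 tT; apply: NNPP => ne; apply: H; exists t; split.
    by rewrite t0 tT.
  by case=> _ /(_ q l).
case: (boolp.choice witness) => tw Htw.
pose L := [seq tp x | x : ('I_Q * 'I_Q * 'I_Q * 'I_Q)%type] ++
          [seq tw sg | sg : {perm 'I_Q}].
have LT t : t \in L -> 0 <= t <= T.
  rewrite mem_cat => /orP[/mapP [x _ ->]|/mapP [x _ ->]].
    by have [] := Htp x.
  by have [] := Htw x.
have sepL q l q' l' : (forall t, t \in L -> cumint (alpha q l) 0 t = cumint (alpha q' l') 0 t) ->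
    pe directed q l q' l'.
  move=> H; apply: NNPP => npe.
  have [_ Hd] := Htp (q, l, q', l'); apply: (Hd npe); apply: H.
  by rewrite mem_cat; apply/orP; left; apply: map_f; rewrite mem_enum.
have [sg [G1 G2]] := grid_step n3 T0' vp vp' law LT sepL.
have [_ Hw] := Htw sg; apply: Hw; split => // q l; apply: G2.
by rewrite mem_cat; apply/orP; right; apply: map_f; rewrite mem_enum.
Qed.
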